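(* Let $$\alpha=\frac{1}{3}\left(3+\sqrt[3]{\tfrac12\left(27-3\sqrt{69}\right)}+\sqrt[3]{\tfrac12\left(27+3\sqrt{69}\right)}\right)\approx 2.3247,$$ $$\beta=\frac{1}{3}\left(2+\sqrt[3]{\tfrac12\left(97-3\sqrt{69}\right)}+\sqrt[3]{\tfrac12\left(97+3\sqrt{69}\right)}\right)\approx 3.0796,$$ let $g(x)=\alpha x(1-x)$, $h(x)=\beta x(1-x)$, and let $$p_\pm=\frac{\beta+1\pm\sqrt{(\beta+1)(\beta-3)}}{2\beta}$$ be the period-2 points of $h$. Then (a) $p_-=\frac{\alpha-1}{\alpha}$, (b) $h\!\left(\frac1\alpha\right)=p_+$, and (c) $g(p_+)=\frac1\alpha$. Consequently the set $\Lambda=\left\{\frac{\alpha-1}{\alpha},\ \frac1\alpha,\ p_+\right\}$ consists of three points, satisfies $\Lambda=g(\Lambda)\cup h(\Lambda)$ (a 3-point toss-and-catch), and contains the bridging point $\frac1\alpha$, which is a periodic point of neither $g$ nor $h$.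
   Context: For $\gamma\in\mathbb{R}$ let $f_\gamma(x)=\gamma x(1-x)$ denote the logistic map; its nontrivial fixed point is $\frac{\gamma-1}{\gamma}$. The logistic IFS is the pair $\{g,h\}=\{f_\alpha,f_\beta\}$ with $\alpha<\beta$, where at each step $g$ is applied with probability $p\in(0,1)$ and $h$ with probability $1-p$, independently. An invariant set of the IFS is a set $\Lambda$ with $\Lambda=g(\Lambda)\cup h(\Lambda)$; a finite invariant set with $n$ points is called an $n$-point toss-and-catch. A bridging point is a point of $\Lambda$ that belongs to neither the union $\Lambda_g$ of all periodic orbits of $g$ nor the union $\Lambda_h$ of all periodic orbits of $h$. *)

(* Defs.v *)
From Stdlib Require Import Reals Lra.
Open Scope R_scope.

Definition cbrt (x : R) : R :=
  if Rlt_dec 0 x then Rpower x (1/3)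
  else if Rlt_dec x 0 then - Rpower (- x) (1/3)
  else 0.

Definition logistic (gamma x : R) : R := gamma * x * (1 - x).

Fixpoint iterate (f : R -> R) (n : nat) (x : R) : R :=
  match n with
  | O => x
  | S k => f (iterate f k x)
  end.

Definition periodic_point (f : R -> R) (x : R) : Prop :=
  exists n : nat, (0 < n)%nat /\ iterate f n x = x.

(* Lambda_f : union of all periodic orbits of f = set of periodic points. *)
Definition periodic_set (f : R -> R) : R -> Prop := periodic_point f.

Definition ifs_invariant (g h : R -> R) (L : R -> Prop) : Prop :=
  forall y, L y <-> exists x, L x /\ (y = g x \/ y = h x).

Definition bridging_point (g h : R -> R) (L : R -> Prop) (x : R) : Prop :=
  L x /\ ~ periodic_set g x /\ ~ periodic_set h x.

Definition alpha0 : R :=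
  (3 + cbrt ((27 - 3 * sqrt 69) / 2) + cbrt ((27 + 3 * sqrt 69) / 2)) / 3.
Definition beta0 : R :=
  (2 + cbrt ((97 - 3 * sqrt 69) / 2) + cbrt ((97 + 3 * sqrt 69) / 2)) / 3.

Definition p_plus : R :=
  (beta0 + 1 + sqrt ((beta0 + 1) * (beta0 - 3))) / (2 * beta0).
Definition p_minus : R :=
  (beta0 + 1 - sqrt ((beta0 + 1) * (beta0 - 3))) / (2 * beta0).

Definition Lambda0 (x : R) : Prop :=
  x = (alpha0 - 1) / alpha0 \/ x = 1 / alpha0 \/ x = p_plus.

(* Main.v *)
Require Import Defs.
From Stdlib Require Import Reals.
Open Scope R_scope.
From Stdlib Require Import Lra Psatz Lia.
Lemma cbrt_pos x : 0 < x -> 0 < cbrt x /\ cbrt x ^ 3 = x.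
Proof.
intros Hx. unfold cbrt. destruct (Rlt_dec 0 x); [|lra]. split.
- unfold Rpower. apply exp_pos.
- replace 3%nat with (3%nat) by reflexivity.
  rewrite <- Rpower_pow by (unfold Rpower; apply exp_pos).
  rewrite Rpower_mult. replace (1/3 * INR 3) with 1 by (simpl; field).
  apply Rpower_1; auto.
Qed.
Lemma s69 : 8.306 < sqrt 69 < 8.307.
Proof.
pose proof (sqrt_sqrt 69 ltac:(lra)). pose proof (sqrt_pos 69). split; nra.
Qed.
Lemma alpha_facts : 2.3 < alpha0 < 2.33 /\ alpha0^3 = 3*alpha0^2 - 2*alpha0 + 1.
Proof.
pose proof s69. unfold alpha0.
set (s := sqrt 69) in *.
assert (HA : 1 < (27 - 3*s)/2 < 1.05) by lra.
assert (HB : 25.95 < (27 + 3*s)/2 < 25.97) by lra.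
destruct (cbrt_pos ((27 - 3*s)/2)) as [p1 c1]; [lra|].
destruct (cbrt_pos ((27 + 3*s)/2)) as [p2 c2]; [lra|].
set (x := cbrt ((27 - 3*s)/2)) in *. set (y := cbrt ((27 + 3*s)/2)) in *.
assert (Hs : s*s = 69) by (apply sqrt_sqrt; lra).
assert (Hxy3 : (x*y)^3 = 3^3).
{ rewrite Rpow_mult_distr, c1, c2. nra. }
assert (Hxy : x*y = 3).
{ assert (0 < x*y) by nra. 
  assert ((x*y - 3) * ((x*y)^2 + 3*(x*y) + 3^2) = 0) by (simpl in *; nra).
  apply Rmult_integral in H1. destruct H1; nra. }
assert (1 < x < 1.02) by (split; nra).
assert (2.96 < y < 2.97) by (split; nra).
split; [lra|].
assert ((x+y)^3 = 27 + 9*(x+y)) .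
{ replace ((x+y)^3) with (x^3 + y^3 + 3*(x*y)*(x+y)) by ring. rewrite c1, c2, Hxy. lra. }
nra.
Qed.
Lemma beta_facts : 3 < beta0 /\ beta0^3 = 2*beta0^2 + 3*beta0 + 1.
Proof.
pose proof s69. unfold beta0.
set (s := sqrt 69) in *.
destruct (cbrt_pos ((97 - 3*s)/2)) as [p1 c1]; [lra|].
destruct (cbrt_pos ((97 + 3*s)/2)) as [p2 c2]; [lra|].
set (x := cbrt ((97 - 3*s)/2)) in *. set (y := cbrt ((97 + 3*s)/2)) in *.
assert (Hs : s*s = 69) by (apply sqrt_sqrt; lra).
assert (Hxy3 : (x*y)^3 = 13^3) by (rewrite Rpow_mult_distr, c1, c2; field_simplify; rewrite ?Rpow_mult_distr; simpl; nra).
assert (Hxy : x*y = 13).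
{ assert (0 < x*y) by nra. 
  assert ((x*y - 13) * ((x*y)^2 + 13*(x*y) + 13^2) = 0) by (simpl in *; nra).
  apply Rmult_integral in H1. destruct H1; nra. }
assert (3.3 < x) by nra.
assert (3.9 < y) by nra.
split; [lra|].
assert ((x+y)^3 = 97 + 39*(x+y)) .
{ replace ((x+y)^3) with (x^3 + y^3 + 3*(x*y)*(x+y)) by ring. rewrite c1, c2, Hxy. lra. }
nra.
Qed.
Lemma beta_eq : beta0 = alpha0^2 - alpha0.
Proof.
destruct alpha_facts as [[a1 a2] ca]. destruct beta_facts as [b1 cb].
set (a := alpha0) in *. set (b := beta0) in *. set (c := a^2 - a).
assert (cc : c^3 = 2*c^2 + 3*c + 1) by (unfold c; nra).
assert (3 < c) by (unfold c; nra).
assert ((b - c) * (b^2 + b*c + c^2 - 2*b - 2*c - 3) = 0) by nra.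
apply Rmult_integral in H0. destruct H0; nra.
Qed.
Lemma sq_eq : sqrt ((beta0 + 1) * (beta0 - 3)) = - alpha0^2 + 3*alpha0 - 1.
Proof.
destruct alpha_facts as [[a1 a2] ca]. rewrite beta_eq.
set (a := alpha0) in *.
replace ((a ^ 2 - a + 1) * (a ^ 2 - a - 3)) with ((- a^2 + 3*a - 1)^2).
- apply sqrt_pow2. nra.
- nra.
Qed.
Lemma div_eq x y z w : y <> 0 -> w <> 0 -> x*w = z*y -> x/y = z/w.
Proof. intros. field_simplify_eq; auto. lra. Qed.
Ltac fin := first [ apply div_eq; [nra|nra|nra] | nra ].
Lemma pp : p_plus = 1 / (alpha0 - 1).
Proof.
destruct alpha_facts as [[a1 a2] ca]. unfold p_plus. rewrite sq_eq, beta_eq.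
set (a := alpha0) in *. field; nra.
Qed.
Lemma pm : p_minus = (alpha0 - 1) / alpha0.
Proof.
destruct alpha_facts as [[a1 a2] ca]. unfold p_minus. rewrite sq_eq, beta_eq.
set (a := alpha0) in *. field_simplify; try nra. fin.
Qed.
Ltac alg := destruct alpha_facts as [[a1 a2] ca]; unfold logistic; try rewrite beta_eq;
  set (a := alpha0) in *; field_simplify; try nra; fin.
Lemma gc : logistic alpha0 ((alpha0-1)/alpha0) = (alpha0-1)/alpha0. Proof. alg. Qed.
Lemma gq : logistic alpha0 (1/alpha0) = (alpha0-1)/alpha0. Proof. alg. Qed.
Lemma gP : logistic alpha0 (1/(alpha0-1)) = 1/alpha0. Proof. alg. Qed.
Lemma hc : logistic beta0 ((alpha0-1)/alpha0) = 1/(alpha0-1). Proof. alg. Qed.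
Lemma hq : logistic beta0 (1/alpha0) = 1/(alpha0-1). Proof. alg. Qed.
Lemma hP : logistic beta0 (1/(alpha0-1)) = (alpha0-1)/alpha0. Proof. alg. Qed.
Lemma div_eq_inv x y z w : y <> 0 -> w <> 0 -> x/y = z/w -> x*w = z*y.
Proof. intros Hy Hw E. apply (f_equal (fun t => t*y*w)) in E. replace (x/y*y*w) with (x*w) in E by (field; auto). replace (z/w*y*w) with (z*y) in E by (field; auto). exact E. Qed.

Theorem mainTheorem2 :
  let g := logistic alpha0 in
  let h := logistic beta0 in
  alpha0 < beta0 /\
  (* p_+ and p_- form the period-2 orbit of h *)
  (p_plus <> p_minus /\ h p_plus = p_minus /\ h p_minus = p_plus) /\
  (* (a), (b), (c) *)
  p_minus = (alpha0 - 1) / alpha0 /\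
  h (1 / alpha0) = p_plus /\
  g p_plus = 1 / alpha0 /\
  (* Lambda has exactly three points *)
  ((alpha0 - 1) / alpha0 <> 1 / alpha0 /\
   (alpha0 - 1) / alpha0 <> p_plus /\
   1 / alpha0 <> p_plus) /\
  (* 3-point toss-and-catch *)
  ifs_invariant g h Lambda0 /\
  (* 1/alpha is a bridging point *)
  bridging_point g h Lambda0 (1 / alpha0).
Proof.
intros g h.
destruct alpha_facts as [[a1 a2] ca].
pose proof gc; pose proof gq; pose proof gP; pose proof hc; pose proof hq; pose proof hP.
assert (Hc : (alpha0-1)/alpha0 <> 1/alpha0).
{ intro E. apply div_eq_inv in E; nra. }
assert (Hd : (alpha0-1)/alpha0 <> 1/(alpha0-1)).
{ intro E. apply div_eq_inv in E; nra. }
assert (He : 1/alpha0 <> 1/(alpha0-1)).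
{ intro E. apply div_eq_inv in E; nra. }
rewrite pp, pm. unfold g, h.
split. { rewrite beta_eq; nra. }
split. { split; [auto|split; auto]. }
split. reflexivity.
split. auto.
split. auto.
split. { split; [auto|split; auto]. }
split.
- intro y. unfold Lambda0. rewrite pp. split.
  + intros [E|[E|E]]; subst y.
    * exists ((alpha0-1)/alpha0). split; auto.
    * exists (1/(alpha0-1)). split; auto.
    * exists (1/alpha0). split; auto.
  + intros [x [[E|[E|E]] [F|F]]]; subst x y; rewrite ?gc, ?gq, ?gP, ?hc, ?hq, ?hP; auto.
- split. { unfold Lambda0. auto. }
  split.
  + intros [n [Hn It]].
    assert (forall k, iterate (logistic alpha0) (S k) (1/alpha0) = (alpha0-1)/alpha0).
    { induction k; simpl in *. apply gq. rewrite IHk. apply gc. }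
    destruct n; [lia|]. rewrite H5 in It. auto.
  + intros [n [Hn It]].
    assert (forall k, iterate (logistic beta0) (S k) (1/alpha0) = 1/(alpha0-1) \/
                      iterate (logistic beta0) (S k) (1/alpha0) = (alpha0-1)/alpha0).
    { induction k; simpl in *. left; apply hq. destruct IHk as [E|E]; rewrite E; auto. }
    destruct n; [lia|]. destruct (H5 n) as [E|E]; rewrite E in It; auto.
Qed.
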